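(* Let $\mathcal{P}$ be a poset with at least two elements that has the Unique Cover Twin Property. Then for every $n\ge 2$, $\lceil\log_2 n\rceil\le \mathrm{isat}(n,\mathcal{P})$.
   Context: In a poset $(P,\le)$, $y$ covers $x$ if $x<y$ and there is no $z$ with $x<z<y$. A poset $\mathcal{P}=(P,\le)$ has the Unique Cover Twin Property (UCTP) if for every $S\in P$ that has exactly one cover $T\in P$, there exists $S'\in P$ with $S'\ne S$ such that $T$ also covers $S'$. $\mathcal{B}_n$ denotes the Boolean lattice $(2^{[n]},\subseteq)$. A family $\mathcal{F}\subseteq 2^{[n]}$ (ordered by inclusion) is induced-$\mathcal{P}$-saturated if it contains no induced copy of $\mathcal{P}$ (an injection $f$ with $u\le v\iff f(u)\subseteq f(v)$) but every family $\mathcal{F}'$ with $\mathcal{F}\subsetneq\mathcal{F}'\subseteq 2^{[n]}$ contains one. $\mathrm{isat}(n,\mathcal{P})$ is the minimum size of an induced-$\mathcal{P}$-saturated family in $\mathcal{B}_n$ (equal to $2^n$ if $\mathcal{P}$ is not an induced subposet of $\mathcal{B}_n$). *)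

(* Defs.v *)
From HB Require Import structures.
From mathcomp Require Import all_boot all_order.
Set Implicit Arguments. Unset Strict Implicit. Unset Printing Implicit Defensive.
Import Order.POrderTheory.
Local Open Scope order_scope.

Definition covers d (P : finPOrderType d) (x y : P) : bool :=
  (x < y) && [forall z : P, ~~ ((x < z) && (z < y))].

Definition UCTP d (P : finPOrderType d) : Prop :=
  forall S T : P, covers S T -> (forall T' : P, covers S T' -> T' = T) ->
    exists S' : P, S' != S /\ covers S' T.

Definition has_induced_copy d (P : finPOrderType d) (n : nat)
    (F : {set {set 'I_n}}) : bool :=
  [exists f : {ffun P -> {set 'I_n}},
     [&& injectiveb f,
         [forall u : P, forall v : P, (u <= v) == (f u \subset f v)]
       & [forall u : P, f u \in F]]].

Definition induced_saturated d (P : finPOrderType d) (n : nat)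
    (F : {set {set 'I_n}}) : bool :=
  ~~ has_induced_copy P F &&
  [forall F' : {set {set 'I_n}}, (F \proper F') ==> has_induced_copy P F'].

(* isat(n,P): minimum size of an induced-P-saturated family (2^n if none) *)
Definition isat d (P : finPOrderType d) (n : nat) : nat :=
  \big[minn/2 ^ n]_(F : {set {set 'I_n}} | induced_saturated P F) #|F|.

(* Main.v *)
Require Import Defs.
From HB Require Import structures.
From mathcomp Require Import all_boot all_order.
Set Implicit Arguments. Unset Strict Implicit. Unset Printing Implicit Defensive.
Import Order.POrderTheory.

Section S.
Variables (d : Order.disp_t) (P : finPOrderType d) (n : nat).
Local Open Scope order_scope.
Implicit Types F : {set {set 'I_n}}.

Lemma has_copyP F : reflect (exists f : {ffun P -> {set 'I_n}},
  [/\ injective f, (forall u v, (u <= v) = (f u \subset f v)) & forall u, f u \in F])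
  (has_induced_copy P F).
Proof.
apply: (iffP existsP) => [[f /and3P[/injectiveP inj /forallP ord /forallP inF]]|[f [inj ord inF]]].
  by exists f; split => // u v; apply/eqP/(forallP (ord u) v).
exists f; apply/and3P; split; [exact/injectiveP| |exact/forallP].
by apply/forallP => u; apply/forallP => v; apply/eqP/ord.
Qed.

Lemma fvF F X (f : {ffun P -> {set 'I_n}}) u v :
  injective f -> (forall v, f v \in X |: F) -> f u = X -> v != u -> f v \in F.
Proof.
move=> inj inF fu vu; have := inF v; rewrite in_setU1 => /orP[/eqP fvX|//].
by rewrite -fu in fvX; move: vu; rewrite (inj _ _ fvX) eqxx.
Qed.

Lemma replace F X A (f : {ffun P -> {set 'I_n}}) u :
  injective f -> (forall u v, (u <= v) = (f u \subset f v)) -> (forall v, f v \in X |: F) ->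
  f u = X -> A \in F -> (forall v, f v != A) ->
  (forall v, v != u -> (f v \subset X) = (f v \subset A)) ->
  (forall v, v != u -> (X \subset f v) = (A \subset f v)) ->
  has_induced_copy P F.
Proof.
move=> inj ord inF fu AF nA hdown hup.
apply/has_copyP; exists [ffun v => if v == u then A else f v]; split.
- move=> v w; rewrite !ffunE.
  case: (eqVneq v u) => [->|vu]; case: (eqVneq w u) => [->|wu] //.
  + by move=> h; case/eqP: (nA w).
  + by move=> h; case/eqP: (nA v).
  + exact: inj.
- move=> v w; rewrite !ffunE ord.
  case: (eqVneq v u) => [->|vu]; case: (eqVneq w u) => [->|wu] //.
  + by rewrite !subxx.
  + by rewrite fu hup.
  + by rewrite fu hdown.
- move=> v; rewrite ffunE; case: eqP => // /eqP; exact: fvF inj inF fu.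
Qed.

Lemma get_copy F X : induced_saturated P F -> X \notin F ->
  exists (f : {ffun P -> {set 'I_n}}) u, [/\ injective f,
    (forall u v, (u <= v) = (f u \subset f v)), (forall v, f v \in X |: F) & f u = X].
Proof.
move=> /andP[noF /forallP satF] XF.
have : has_induced_copy P (X |: F).
  apply: (implyP (satF _)); rewrite properE subsetUr /=.
  by apply/negP => /subsetP /(_ X); rewrite setU11 (negbTE XF) => /(_ isT).
move/has_copyP => [f [inj ord inF]].
case: (pickP (fun u => f u == X)) => [u /eqP fu|none].
  by exists f, u.
case/negP: noF; apply/has_copyP; exists f; split => // v.
by have := inF v; rewrite in_setU1 none.
Qed.


Lemma sat_sep F (i j : 'I_n) : (2 <= #|P|)%N -> UCTP P -> induced_saturated P F ->
  i != j -> (forall A, A \in F -> (i \in A) = (j \in A)) -> False.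
Proof.
move=> P2 uc sat ij sep.
have [F0|] := eqVneq F set0.
  have X0 : (@set0 'I_n) \notin F by rewrite F0 inE.
  have [f [u [inj ord inF fu]]] := get_copy sat X0.
  have : (#|[set f x | x in [set: P]]| <= #|[set (@set0 'I_n)]|)%N.
    apply: subset_leq_card; apply/subsetP => _ /imsetP[x _ ->].
    by have := inF x; rewrite F0 setU0.
  by rewrite card_imset // cardsT cards1 leqNgt P2.
case/set0Pn => A0 A0F.
case: (boolP [exists A in F, i \notin A]) => [/exists_inP[B0 B0F iB0]|noA].
-
  have [A /andP[AF iA] Amax] : exists2 A, (A \in F) && (i \notin A) &
      forall B, B \in F -> i \notin B -> (#|B| <= #|A|)%N.
    case: (@arg_maxnP _ B0 (fun B => (B \in F) && (i \notin B)) (fun B => #|B|));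
      first by rewrite B0F.
    by move=> A HA Hmax; exists A => // B BF iB; apply: Hmax; rewrite BF.
  have maxim B : B \in F -> A \subset B -> i \notin B -> B = A.
    by move=> BF AB iB; apply/esym/eqP; rewrite eqEcard AB Amax.
  have jA : j \notin A by rewrite -sep.
  set X := i |: A.
  have XF : X \notin F.
    apply/negP => XF; have := sep _ XF; rewrite setU11 in_setU1 eq_sym (negbTE ij).
    by rewrite (negbTE jA).
  have [f [u [inj ord inF fu]]] := get_copy sat XF.
  have AX : A \subset X by apply: subsetUr.
  have down v : v != u -> f v \subset X -> f v \subset A.
    move=> vu sX; have fF := fvF inj inF fu vu.
    have ifv : i \notin f v.
      apply/negP => ifv; move: (ifv); rewrite (sep _ fF) => /(subsetP sX).
      by rewrite in_setU1 eq_sym (negbTE ij) (negbTE jA).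
    apply/subsetP => x xv; have := subsetP sX x xv; rewrite in_setU1.
    by case/orP => // /eqP xi; move: ifv; rewrite -xi xv.
  have up v : v != u -> A \subset f v -> f v = A \/ X \subset f v.
    move=> vu Av; have fF := fvF inj inF fu vu.
    case: (boolP (i \in f v)) => ifv; last by left; apply: maxim.
    by right; rewrite subUset sub1set ifv Av.
  have XA : X != A by apply/negP => /eqP XA; move: iA; rewrite -XA setU11.
  case: (pickP (fun w => f w == A)) => [w /eqP fw|nA]; last first.
    have nA' v : f v != A by rewrite nA.
    move: (sat) => /andP[/negP noF _]; apply: noF.
    apply: (replace inj ord inF fu AF nA') => v vu.
      by apply/idP/idP => [/(down _ vu)|/subset_trans]; last apply.
    apply/idP/idP => [/(subset_trans AX)//|/(up _ vu)[fvA|//]].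
    by move: (nA' v); rewrite fvA eqxx.
  have wu : w != u by apply/negP => /eqP wu; move: XA; rewrite -fu -fw wu eqxx.
  have wltu : w < u by rewrite lt_neqAle wu ord fw fu AX.
  have below z : z != u -> z < u -> z <= w.
    by move=> zu /ltW; rewrite ord ord fu fw => /(down _ zu).
  have above z : z != w -> w < z -> z != u -> u <= z.
    move=> zw /ltW; rewrite ord fw => /(up _) H zu; case: (H zu) => [fzA|].
      by move: zw; rewrite -fw in fzA; rewrite (inj _ _ fzA) eqxx.
    by rewrite ord fu.
  have cov : covers w u.
    rewrite /covers wltu /=; apply/forallP => z; apply/negP => /andP[wz zu].
    have := below z (negbT (lt_eqF zu)) zu => zw.
    by have := lt_le_trans wz zw; rewrite ltxx.
  have uniq T' : covers w T' -> T' = u.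
    case/andP => wT /forallP nb; apply/eqP; apply/negPn/negP => Tu.
    have uT := above T' (negbT (gt_eqF wT)) wT Tu.
    have uT' : u < T' by rewrite lt_neqAle eq_sym Tu uT.
    by move: (nb u); rewrite wltu uT'.
  have [S' [Sw /andP[Su /forallP nb]]] := uc _ _ cov uniq.
  have Sw' : S' < w by rewrite lt_neqAle Sw below // lt_eqF.
  by move: (nb w); rewrite Sw' wltu.
-
  have allI B : B \in F -> i \in B.
    move=> BF; apply/negPn/negP => iB; case/negP: noA; apply/exists_inP; by exists B.
  have [A AF Amin] : exists2 A, A \in F & forall B, B \in F -> (#|A| <= #|B|)%N.
    case: (@arg_minnP _ A0 (fun B => B \in F) (fun B => #|B|)) => //.
    by move=> A HA Hmin; exists A.
  have minim B : B \in F -> B \subset A -> B = A.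
    by move=> BF BA; apply/eqP; rewrite eqEcard BA Amin.
  set X := A :\ i.
  have iX : i \notin X by rewrite setD11.
  have XF : X \notin F by apply/negP => /allI; rewrite (negbTE iX).
  have [f [u [inj ord inF fu]]] := get_copy sat XF.
  have XA : X \subset A by apply: subD1set.
  have down v : v != u -> ~~ (f v \subset X).
    move=> vu; apply/negP => /subsetP /(_ i (allI _ (fvF inj inF fu vu))).
    by rewrite (negbTE iX).
  have down2 v : v != u -> f v \subset A -> f v = A.
    by move=> vu; apply: minim; exact: fvF inj inF fu vu.
  have up v : v != u -> (X \subset f v) = (A \subset f v).
    move=> vu; apply/idP/idP => [sX|/(subset_trans XA)//].
    apply/subsetP => x xA; case: (eqVneq x i) => [->|xi].
      exact: allI (fvF inj inF fu vu).
    by apply: (subsetP sX); rewrite in_setD1 xi.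
  have XA' : X != A by apply/negP => /eqP XA'; move: iX; rewrite XA' allI.
  case: (pickP (fun w => f w == A)) => [w /eqP fw|nA]; last first.
    have nA' v : f v != A by rewrite nA.
    move: (sat) => /andP[/negP noF _]; apply: noF.
    apply: (replace inj ord inF fu AF nA') => v vu; last exact: up.
    rewrite (negbTE (down _ vu)); apply/esym/negP => /(down2 _ vu) fvA.
    by move: (nA' v); rewrite fvA eqxx.
  have uw : u != w by apply/negP => /eqP uw; move: XA'; rewrite -fu -fw uw eqxx.
  have ultw : u < w by rewrite lt_neqAle uw ord fw fu XA.
  have below z : z != u -> z <= w -> z = w.
    by move=> zu; rewrite ord fw => /(down2 _ zu); rewrite -fw => /inj.
  have above z : z != u -> u <= z -> w <= z.
    by move=> zu; rewrite ord ord fu fw up.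
  have cov : covers u w.
    rewrite /covers ultw /=; apply/forallP => z; apply/negP => /andP[uz zw].
    have := below z (negbT (gt_eqF uz)) (ltW zw) => zw'.
    by move: zw; rewrite zw' ltxx.
  have uniq T' : covers u T' -> T' = w.
    case/andP => uT /forallP nb; apply/eqP; apply/negPn/negP => Tw.
    have wT := above T' (negbT (gt_eqF uT)) (ltW uT).
    have wT' : w < T' by rewrite lt_neqAle eq_sym Tw wT.
    by move: (nb w); rewrite ultw wT'.
  have [S' [Su /andP[Sw _]]] := uc _ _ cov uniq.
  by have := below S' Su (ltW Sw) => Sw'; move: Sw; rewrite Sw' ltxx.
Qed.

End S.

Lemma sat_bound d (P : finPOrderType d) n (F : {set {set 'I_n}}) :
  2 <= #|P| -> UCTP P -> induced_saturated P F -> up_log 2 n <= #|F|.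
Proof.
move=> P2 uc sat; rewrite leqNgt; apply/negP => lt.
have lt2 : 2 ^ #|F| < n.
  by rewrite ltnNge; apply/negP => /(up_log_min (isT : 1 < 2)); rewrite leqNgt lt.
pose sig (i : 'I_n) := [set A in F | i \in A].
have : ~~ injectiveb sig.
  apply/negP => /injectiveP inj.
  have : #|[set sig x | x in [set: 'I_n]]| <= #|powerset F|.
    apply: subset_leq_card; apply/subsetP => _ /imsetP[x _ ->].
    by rewrite inE; apply/subsetP => A; rewrite inE => /andP[].
  by rewrite card_imset // cardsT card_ord card_powerset leqNgt lt2.
case/injectivePn => i [j ij eq].
apply: (sat_sep P2 uc sat ij) => A AF.
have : (A \in sig i) = (A \in sig j) by rewrite eq.
by rewrite !inE AF.
Qed.

Theorem theorem1p9 (d : Order.disp_t) (P : finPOrderType d) :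
  2 <= #|P| -> UCTP P ->
  forall n : nat, 2 <= n -> up_log 2 n <= isat P n.
Proof.
move=> P2 uc n n2; rewrite /isat.
apply: (big_ind (fun x => up_log 2 n <= x)).
- apply: up_log_min => //; exact: leq_trans (ltnW (ltn_expl n (isT : 1 < 2))) (ltnW (ltn_expl _ (isT : 1 < 2))).
- by move=> x y hx hy; rewrite leq_min hx hy.
- by move=> F; apply: sat_bound.
Qed.
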